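(* Let $V$ be a nonempty set, $E\subset V\times V$, $W\subset V$, and let $B,C\subset V$ satisfy $B\cap C=\emptyset$, $B\cap W=\emptyset$, $C\cap W=\emptyset$. Let $b\in B$ and $c\in C$ be such that $b\,A_W\,c$ and $\operatorname{cl}_W(\{b\})\cap\operatorname{cl}_W(\{c\})=\emptyset$. Then there exist $w_b,w_c\in W$ with $w_b\,C_W\,w_c$ such that $\operatorname{cl}_W(\{b\})\cap\operatorname{cl}_W(\{w_b\})\neq\emptyset$ and $\operatorname{cl}_W(\{c\})\cap\operatorname{cl}_W(\{w_c\})\neq\emptyset$.
   Context: Relations on $V$: $x\,R\,y$ means $(x,y)\in R$; composition $RR'$: $x(RR')y$ iff there is $z$ with $xRz$ and $zR'y$; $R^{-1}$ is the converse; $R^0=\Delta$, $R^{n+1}=RR^n$, $R^+=\bigcup_{k\ge1}R^k$, $R^*=\bigcup_{k\ge0}R^k$. For $S\subset V$, $\Delta_S=\{(x,x):x\in S\}$, $\Delta=\Delta_V$. For any relation $F$, $\mathcal T_F=\{O\subset V: OF\subset O\}$ is a topology on $V$, where $OF=\{y:\exists o\in O,\ oFy\}$. With $W^c=V\setminus W$: $E_W=\Delta_{W^c}E$; $B_W=E(E_W)^*$; $B_W^-=(B_W)^{-1}=(E_W^{-1})^*E^{-1}$; $K_W=B_W^-\Delta_{W^c}B_W$; $C_W=(\Delta_WK_W\Delta_W)^+\cup\Delta_W$ (a partial equivalence relation); $A_W=\Delta\cup B_W\cup B_W^-\cup K_W\cup(B_W\cup K_W)\,C_W\,(B_W^-\cup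 K_W^{-1})$. For $S\subset V$, $\operatorname{cl}_W(S)$ is the topological closure of $S$ in the topology $\mathcal T_{E_W}$. *)

(* Defs.v *)
From Stdlib Require Import Arith.

Definition relation (V : Type) := V -> V -> Prop.
Definition vset (V : Type) := V -> Prop.

Section Rel.
Context {V : Type}.

Definition comp (R R' : relation V) : relation V :=
  fun x y => exists z, R x z /\ R' z y.
Definition conv (R : relation V) : relation V := fun x y => R y x.
Definition runion (R R' : relation V) : relation V := fun x y => R x y \/ R' x y.
Definition diag (S : vset V) : relation V := fun x y => x = y /\ S x.
Definition Delta : relation V := fun x y => x = y.
Definition compl (S : vset V) : vset V := fun x => ~ S x.

Fixpoint rpow (R : relation V) (n : nat) : relation V :=
  match n with
  | O => Delta
  | S n' => comp R (rpow R n')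
  end.
Definition rplus (R : relation V) : relation V := fun x y => exists k, 1 <= k /\ rpow R k x y.
Definition rstar (R : relation V) : relation V := fun x y => exists k, rpow R k x y.

Definition img (O : vset V) (F : relation V) : vset V := fun y => exists o, O o /\ F o y.
Definition openF (F : relation V) (O : vset V) : Prop := forall y, img O F y -> O y.
Definition closedF (F : relation V) (Cl : vset V) : Prop := openF F (compl Cl).
Definition closureF (F : relation V) (S : vset V) : vset V :=
  fun x => forall Cl, closedF F Cl -> (forall s, S s -> Cl s) -> Cl x.

Variables (E : relation V) (W : vset V).

Definition E_W : relation V := comp (diag (compl W)) E.
Definition B_W : relation V := comp E (rstar E_W).
Definition Bm_W : relation V := conv B_W.
Definition K_W : relation V := comp Bm_W (comp (diag (compl W)) B_W).
Definition C_W : relation V :=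
  runion (rplus (comp (diag W) (comp K_W (diag W)))) (diag W).
Definition A_W : relation V :=
  runion Delta (runion B_W (runion Bm_W (runion K_W
    (comp (runion B_W K_W) (comp C_W (runion Bm_W (conv K_W))))))).
Definition cl_W (S : vset V) : vset V := closureF E_W S.

End Rel.

Definition singleton {V : Type} (a : V) : vset V := fun x => x = a.

(* Main.v *)
Require Import Defs.
From Stdlib Require Import Classical Arith.

Section H.
Context {V : Type} (E : relation V) (W : vset V).

Lemma rs_refl x : rstar (E_W E W) x x.
Proof. exists 0. reflexivity. Qed.

Lemma rs_cons x y z : E_W E W x y -> rstar (E_W E W) y z -> rstar (E_W E W) x z.
Proof. intros H [k Hk]. exists (S k). exists y. split; assumption. Qed.

Lemma rs_cl x a : rstar (E_W E W) x a -> cl_W E W (singleton a) x.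
Proof.
  intros [k Hk]. revert x Hk. induction k as [|k IH]; intros x Hk Cl HCl Ha.
  - simpl in Hk. unfold Delta in Hk. subst. apply Ha. reflexivity.
  - destruct Hk as [u [Hxu Hu]].
    apply NNPP. intro Hn.
    assert (Cu : Cl u) by (apply (IH u Hu Cl HCl Ha)).
    apply (HCl u); [| exact Cu].
    exists x. split; assumption.
Qed.

Lemma LB x y : ~ W x -> B_W E W x y -> rstar (E_W E W) x y.
Proof.
  intros Hx [u [Hxu Hu]]. apply rs_cons with u; [|exact Hu].
  exists x. split; [split; [reflexivity|exact Hx]|exact Hxu].
Qed.

Lemma LK x y : K_W E W x y -> exists z, rstar (E_W E W) z x /\ rstar (E_W E W) z y.
Proof.
  intros [z [Hzx [t [[<- Hz] Hzy]]]].
  exists z. split; apply LB; assumption.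
Qed.

Lemma CW_W x y : C_W E W x y -> W x /\ W y.
Proof.
  intros [[k [Hk Hp]] | [<- Hx]]; [|split; assumption].
  destruct k as [|k]; [inversion Hk|].
  clear Hk. revert x Hp. induction k as [|k IH]; intros x Hp.
  - destruct Hp as [u [[v [[<- Hx] [t [_ [<- Hu]]]]] Hd]].
    simpl in Hd. unfold Delta in Hd. subst. split; assumption.
  - destruct Hp as [u [[v [[<- Hx] _]] Hd]].
    split; [assumption|]. exact (proj2 (IH u Hd)).
Qed.

End H.

Theorem lemma1 (V : Type) (HV : inhabited V) (E : relation V) (W : vset V)
  (Bs Cs : vset V)
  (hBC : forall x, Bs x -> Cs x -> False)
  (hBW : forall x, Bs x -> W x -> False)
  (hCW : forall x, Cs x -> W x -> False)
  (b c : V) (hb : Bs b) (hc : Cs c)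
  (hA : A_W E W b c)
  (hdisj : forall x, cl_W E W (singleton b) x -> cl_W E W (singleton c) x -> False) :
  exists wb wc, W wb /\ W wc /\ C_W E W wb wc /\
    (exists x, cl_W E W (singleton b) x /\ cl_W E W (singleton wb) x) /\
    (exists x, cl_W E W (singleton c) x /\ cl_W E W (singleton wc) x).
Proof.
  assert (nb : ~ W b) by (intro; eapply hBW; eauto).
  assert (nc : ~ W c) by (intro; eapply hCW; eauto).
  destruct hA as [H | [H | [H | [H | H]]]].
  - unfold Delta in H. subst. exfalso. eauto.
  - exfalso. apply (hdisj b); apply rs_cl; [apply rs_refl|apply LB; assumption].
  - exfalso. apply (hdisj c); apply rs_cl; [apply LB; assumption|apply rs_refl].
  - exfalso. destruct (LK E W b c H) as [z [H1 H2]].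
    apply (hdisj z); apply rs_cl; assumption.
  - destruct H as [wb [H1 [wc [H2 H3]]]].
    destruct (CW_W E W wb wc H2) as [Wb Wc].
    exists wb, wc. split; [exact Wb|]. split; [exact Wc|]. split; [exact H2|].
    split.
    + destruct H1 as [H1 | H1].
      * exists b. split; apply rs_cl; [apply rs_refl|apply LB; assumption].
      * destruct (LK E W b wb H1) as [z [Z1 Z2]].
        exists z. split; apply rs_cl; assumption.
    + destruct H3 as [H3 | H3].
      * exists c. split; apply rs_cl; [apply rs_refl|apply LB; assumption].
      * destruct (LK E W c wc H3) as [z [Z1 Z2]].
        exists z. split; apply rs_cl; assumption.
Qed.
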